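(* Every $\operatorname{B}$-set $B\subset\mathbb{R}^2$ has positive reach.
   Context: A set has positive reach if there is $\varepsilon>0$ such that every point at distance less than $\varepsilon$ from it has a unique nearest point in it. A function $f$ on an open interval is semiconcave if $f(x)-\frac c2x^2$ is concave for some $c\geq0$, and semiconvex if $-f$ is semiconcave. $M\subset\mathbb{R}^2$ is a $\operatorname{B}_-$-set if there are $r>0$ and Lipschitz functions $\psi\leq0\leq\varphi$ on $[0,r]$ with $\varphi$ semiconcave on $(0,r)$, $\psi$ semiconvex on $(0,r)$, $\varphi(0)=\psi(0)=0$, $\varphi'_+(0)=\psi'_+(0)=0$ and $M=\{(x,y):x\in[0,r],\ \psi(x)\leq y\leq\varphi(x)\}$; a $\operatorname{B}_+$-set is defined the same way with $[-r,r]$, $(-r,r)$ and $\varphi'(0)=\psi'(0)=0$; a $\operatorname{B}$-set is a $\operatorname{B}_-$-set or a $\operatorname{B}_+$-set. *)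

(* Defs.v *)
From Stdlib Require Import Reals.
Open Scope R_scope.

Definition point := (R * R)%type.

Definition dist2 (p q : point) : R :=
  sqrt ((fst p - fst q)^2 + (snd p - snd q)^2).

Definition nearest (M : point -> Prop) (x m : point) : Prop :=
  M m /\ forall m', M m' -> dist2 x m <= dist2 x m'.

(* positive reach: exists eps > 0 such that every point at distance < eps
   from M (i.e. dist(x,M) < eps, equivalently some m in M with |x-m| < eps)
   has a unique nearest point in M *)
Definition positive_reach (M : point -> Prop) : Prop :=
  exists eps, 0 < eps /\
    forall x : point, (exists m, M m /\ dist2 x m < eps) ->
      exists! m, nearest M x m.

Definition lipschitz_on (f : R -> R) (a b : R) : Prop :=
  exists L, forall x y, a <= x <= b -> a <= y <= b ->
    Rabs (f x - f y) <= L * Rabs (x - y).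

Definition concave_on (f : R -> R) (a b : R) : Prop :=
  forall x y t, a < x < b -> a < y < b -> 0 <= t <= 1 ->
    t * f x + (1 - t) * f y <= f (t * x + (1 - t) * y).

Definition semiconcave_on (f : R -> R) (a b : R) : Prop :=
  exists c, 0 <= c /\ concave_on (fun x => f x - c / 2 * x ^ 2) a b.

Definition semiconvex_on (f : R -> R) (a b : R) : Prop :=
  semiconcave_on (fun x => - f x) a b.

Definition right_deriv0_zero (f : R -> R) : Prop :=
  forall e, 0 < e -> exists d, 0 < d /\
    forall h, 0 < h < d -> Rabs ((f h - f 0) / h) <= e.

Definition deriv0_zero (f : R -> R) : Prop :=
  forall e, 0 < e -> exists d, 0 < d /\
    forall h, h <> 0 -> Rabs h < d -> Rabs ((f h - f 0) / h) <= e.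

Definition B_minus_set (M : point -> Prop) : Prop :=
  exists r (phi psi : R -> R), 0 < r /\
    lipschitz_on phi 0 r /\ lipschitz_on psi 0 r /\
    (forall x, 0 <= x <= r -> psi x <= 0 <= phi x) /\
    semiconcave_on phi 0 r /\ semiconvex_on psi 0 r /\
    phi 0 = 0 /\ psi 0 = 0 /\
    right_deriv0_zero phi /\ right_deriv0_zero psi /\
    (forall p : point, M p <->
       (0 <= fst p <= r /\ psi (fst p) <= snd p <= phi (fst p))).

Definition B_plus_set (M : point -> Prop) : Prop :=
  exists r (phi psi : R -> R), 0 < r /\
    lipschitz_on phi (- r) r /\ lipschitz_on psi (- r) r /\
    (forall x, - r <= x <= r -> psi x <= 0 <= phi x) /\
    semiconcave_on phi (- r) r /\ semiconvex_on psi (- r) r /\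
    phi 0 = 0 /\ psi 0 = 0 /\
    deriv0_zero phi /\ deriv0_zero psi /\
    (forall p : point, M p <->
       (- r <= fst p <= r /\ psi (fst p) <= snd p <= phi (fst p))).

Definition B_set (M : point -> Prop) : Prop := B_minus_set M \/ B_plus_set M.

(* Main.v *)
Require Import Defs.
From Stdlib Require Import Reals Lra Psatz.
Open Scope R_scope.

Lemma abs_le_elim z B : Rabs z <= B -> -B <= z <= B.
Proof. unfold Rabs; destruct (Rcase_abs z); intros; lra. Qed.
Lemma abs_le_intro z B : -B <= z <= B -> Rabs z <= B.
Proof. unfold Rabs; destruct (Rcase_abs z); intros; lra. Qed.

Definition lipK (f : R -> R) a b L :=
  forall x y, a<=x<=b -> a<=y<=b -> Rabs (f x - f y) <= L * Rabs (x-y).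

Lemma lip_nonneg f a b : lipschitz_on f a b -> exists L, 0 <= L /\ lipK f a b L.
Proof.
  intros [L HL]. exists (Rabs L). split. apply Rabs_pos. intros x y Hx Hy.
  specialize (HL x y Hx Hy). eapply Rle_trans; [exact HL|].
  apply Rmult_le_compat_r; [apply Rabs_pos| apply RRle_abs].
Qed.

Lemma lip_bound f a b L x y B: lipK f a b L -> 0 <= L -> a<=x<=b -> a<=y<=b ->
  Rabs (x - y) <= B -> -(L*B) <= f x - f y <= L*B.
Proof.
  intros H HL Hx Hy HB. apply abs_le_elim. eapply Rle_trans. apply H; auto.
  apply Rmult_le_compat_l; auto.
Qed.

Lemma approx_le G K : 0 <= K -> (forall d, 0 < d < 1 -> G <= K * d) -> G <= 0.
Proof.
  intros HK H. destruct (Rle_dec G 0) as [|Hn]; [auto|]. exfalso.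
  assert (HG: 0 < G) by lra.
  set (d := G / (2 * (K + G))).
  assert (Hdd: d * (2*(K+G)) = G) by (unfold d; field; lra).
  assert (Hd0: 0 < d) by (unfold d; apply Rdiv_lt_0_compat; lra).
  assert (Hd: 0 < d < 1) by (split; nra).
  specialize (H d Hd). nra.
Qed.

Lemma semiconcave_mid f a b c L : a < b -> 0 <= c -> 0 <= L -> lipK f a b L ->
  concave_on (fun x => f x - c/2 * x^2) a b ->
  forall p q, a<=p<=b -> a<=q<=b ->
  (f p + f q)/2 - c/8*(q-p)^2 <= f ((p+q)/2).
Proof.
  intros Hab Hc HL Hlip Hconc p q Hp Hq.
  set (m0 := (a+b)/2).
  assert (H: forall d, 0<d<1 -> (f p + f q)/2 - c/8*(q-p)^2 - f((p+q)/2) <= (2*L*(b-a)) * d).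
  { intros d Hd.
    set (p' := p + d*(m0-p)). set (q' := q + d*(m0-q)).
    assert (Hp': a < p' < b). { unfold p', m0.
      assert (0 <= (1-d)*(p-a)) by (apply Rmult_le_pos; lra).
      assert (0 <= (1-d)*(b-p)) by (apply Rmult_le_pos; lra). split; nra. }
    assert (Hq': a < q' < b). { unfold q', m0;
      assert (0 <= (1-d)*(q-a)) by (apply Rmult_le_pos; lra).
      assert (0 <= (1-d)*(b-q)) by (apply Rmult_le_pos; lra). split; nra. }
    pose proof (Hconc p' q' (1/2) Hp' Hq' ltac:(lra)) as Hc1. cbv beta in Hc1.
    replace (1/2*p' + (1-1/2)*q') with ((p'+q')/2) in Hc1 by field.
    assert (E: (p'+q')/2 = (p+q)/2 + d*(m0 - (p+q)/2)) by (unfold p',q'; field).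
    assert (Hmid: a <= (p+q)/2 <= b) by lra.
    assert (Hmid': a <= (p'+q')/2 <= b) by lra.
    pose proof (lip_bound f a b L p' p (d*(b-a)) Hlip HL ltac:(lra) Hp
      ltac:(apply abs_le_intro; unfold p', m0; split; nra)) as B1.
    pose proof (lip_bound f a b L q' q (d*(b-a)) Hlip HL ltac:(lra) Hq
      ltac:(apply abs_le_intro; unfold q', m0; split; nra)) as B2.
    pose proof (lip_bound f a b L ((p'+q')/2) ((p+q)/2) (d*(b-a)) Hlip HL Hmid' Hmid
      ltac:(apply abs_le_intro; rewrite E; unfold m0; split; nra)) as B3.
    assert (Hsq: (q'-p')^2 <= (q-p)^2).
    { replace (q'-p') with ((1-d)*(q-p)) by (unfold p', q'; ring).
      rewrite Rpow_mult_distr. assert (0 <= (1-d)^2 <= 1) by (split; nra).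
      assert (0 <= (q-p)^2) by apply pow2_ge_0. nra. }
    assert (Hsq2: c/8*(q'-p')^2 <= c/8*(q-p)^2).
    { apply Rmult_le_compat_l; lra. }
    assert (Hk: f ((p'+q')/2) >= (f p' + f q')/2 - c/8*(q'-p')^2).
    { assert (Id: ((p'+q')/2)^2 = 1/2*p'^2 + (1-1/2)*q'^2 - (q'-p')^2/4) by field.
      rewrite Id in Hc1. lra. }
    nra. }
  pose proof (approx_le _ (2*L*(b-a)) ltac:(nra) H). lra.
Qed.

Lemma lip_cont f x K : 0 <= K -> (forall y, Rabs (f y - f x) <= K * Rabs (y - x)) ->
  continuity_pt f x.
Proof.
  intros HK H. unfold continuity_pt, continue_in, limit1_in, limit_in.
  intros eps Heps. exists (eps/(K+1)). split.
  - apply Rdiv_lt_0_compat; lra.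
  - intros y [_ Hy]. simpl in *. unfold R_dist in *.
    eapply Rle_lt_trans. apply H.
    assert (Hd: eps/(K+1) * (K+1) = eps) by (field; lra).
    pose proof (Rabs_pos (y - x)). nra.
Qed.

Lemma clamp_lip p p' q q' v :
  Rabs (Rmax p (Rmin v q) - Rmax p' (Rmin v q')) <= Rabs (p - p') + Rabs (q - q').
Proof.
  unfold Rmax, Rmin; repeat destruct Rle_dec; unfold Rabs; repeat destruct Rcase_abs; lra.
Qed.

Lemma proj_lip a b t t' : Rabs (Rmax a (Rmin t b) - Rmax a (Rmin t' b)) <= Rabs (t - t').
Proof.
  unfold Rmax, Rmin; repeat destruct Rle_dec; unfold Rabs; repeat destruct Rcase_abs; lra.
Qed.

Lemma proj_in a b t : a <= b -> a <= Rmax a (Rmin t b) <= b.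
Proof. intros; unfold Rmax, Rmin; repeat destruct Rle_dec; lra. Qed.

Lemma proj_id a b t : a <= t <= b -> Rmax a (Rmin t b) = t.
Proof. intros; unfold Rmax, Rmin; repeat destruct Rle_dec; lra. Qed.

Lemma clamp_in p q v : p <= q -> p <= Rmax p (Rmin v q) <= q.
Proof. intros; unfold Rmax, Rmin; repeat destruct Rle_dec; lra. Qed.

Lemma clamp_best p q v y : p <= y <= q ->
  (v - Rmax p (Rmin v q)) * (v - Rmax p (Rmin v q)) <= (v - y)^2.
Proof. intros; unfold Rmax, Rmin; repeat destruct Rle_dec; simpl; try nra.
all: replace (v-v) with 0 by ring; rewrite Rmult_0_l, Rmult_1_r; apply Rle_0_sqr.
Qed.

Definition sqd (p q : point) := (fst p - fst q)^2 + (snd p - snd q)^2.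

Section Region.
Variables (a b : R) (phi psi : R -> R) (M : point -> Prop).
Hypothesis Hab : a < b.
Hypothesis HM : forall p, M p <-> (a <= fst p <= b /\ psi (fst p) <= snd p <= phi (fst p)).
Hypothesis Hord : forall x, a<=x<=b -> psi x <= phi x.

Lemma exists_nearest L1 L2 : 0 <= L1 -> 0 <= L2 -> lipK phi a b L1 -> lipK psi a b L2 ->
  forall x, exists m, nearest M x m.
Proof.
  intros HL1 HL2 Hl1 Hl2 [X1 X2].
  set (P := fun t => psi (Rmax a (Rmin t b))).
  set (Q := fun t => phi (Rmax a (Rmin t b))).
  set (yc := fun t => Rmax (P t) (Rmin X2 (Q t))).
  set (G := fun t => (X1 - t) * (X1 - t) + (X2 - yc t) * (X2 - yc t)).
  assert (HPQ: forall t, P t <= Q t).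
  { intro t. unfold P, Q. apply Hord. apply proj_in; lra. }
  assert (Hlipyc: forall t t', Rabs (yc t - yc t') <= (L1 + L2) * Rabs (t - t')).
  { intros t t'. unfold yc. eapply Rle_trans. apply clamp_lip.
    pose proof (proj_lip a b t t').
    pose proof (Hl2 _ _ (proj_in a b t ltac:(lra)) (proj_in a b t' ltac:(lra))).
    pose proof (Hl1 _ _ (proj_in a b t ltac:(lra)) (proj_in a b t' ltac:(lra))).
    unfold P, Q. nra. }
  assert (HG: forall t, continuity_pt G t).
  { intro t.
    assert (C1: continuity_pt (fun t => X1 - t) t).
    { apply (lip_cont _ _ 1); [lra|]. intro y.
      replace (X1 - y - (X1 - t)) with (-(y - t)) by ring. rewrite Rabs_Ropp. lra. }
    assert (C2: continuity_pt (fun t => X2 - yc t) t).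
    { apply (lip_cont _ _ (L1+L2)); [lra|]. intro y.
      replace (X2 - yc y - (X2 - yc t)) with (-(yc y - yc t)) by ring. rewrite Rabs_Ropp. auto. }
    apply (continuity_pt_plus (fun t => (X1 - t) * (X1 - t)) (fun t => (X2 - yc t) * (X2 - yc t)));
    [apply (continuity_pt_mult (fun t => X1 - t) (fun t => X1 - t)) |
     apply (continuity_pt_mult (fun t => X2 - yc t) (fun t => X2 - yc t))]; auto. }
  destruct (continuity_ab_min G a b ltac:(lra) (fun c _ => HG c)) as [t [Hmin Ht]].
  exists (t, yc t). split.
  - apply HM. simpl. split; auto.
    unfold yc, P, Q; rewrite (proj_id a b t Ht); apply clamp_in; apply Hord; auto.
  - intros [t' y'] Hm'. apply HM in Hm'. simpl in Hm'. destruct Hm' as [Ht' Hy'].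
    unfold dist2. simpl. apply sqrt_le_1_alt.
    pose proof (Hmin t' Ht'). unfold G in H.
    assert (Hb: (X2 - yc t') * (X2 - yc t') <= (X2 - y')^2).
    { unfold yc, P, Q. apply clamp_best. rewrite (proj_id a b t' Ht'). exact Hy'. }
    nra.
Qed.


Lemma unique_nearest c1 c2 : 0 <= c1 -> 0 <= c2 ->
  (forall p q, a<=p<=b -> a<=q<=b -> (phi p + phi q)/2 - c1/8*(q-p)^2 <= phi ((p+q)/2)) ->
  (forall p q, a<=p<=b -> a<=q<=b -> (-psi p + - psi q)/2 - c2/8*(q-p)^2 <= - psi ((p+q)/2)) ->
  forall x m1 m2, nearest M x m1 -> nearest M x m2 ->
    dist2 x m1 < 1/(4*(c1+c2+1)) -> m1 = m2.
Proof.
  intros Hc1 Hc2 Hphi Hpsi [X1 X2] [s1 y1] [s2 y2] [Hm1 N1] [Hm2 N2] Hd.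
  set (eps := 1/(4*(c1+c2+1))) in *.
  assert (Heps: eps * (4*(c1+c2+1)) = 1) by (unfold eps; field; lra).
  assert (Heps0: 0 < eps) by (unfold eps; apply Rdiv_lt_0_compat; lra).
  assert (Hnear: forall q1 q2, M (q1,q2) ->
    (X1-s1)^2+(X2-y1)^2 <= (X1-q1)^2+(X2-q2)^2).
  { intros q1 q2 Hq. apply sqrt_le_0; try (apply Rplus_le_le_0_compat; apply pow2_ge_0).
    exact (N1 _ Hq). }
  assert (E: (X1-s1)^2+(X2-y1)^2 = (X1-s2)^2+(X2-y2)^2).
  { apply Rle_antisym. apply Hnear; auto.
    apply sqrt_le_0; try (apply Rplus_le_le_0_compat; apply pow2_ge_0).
    exact (N2 _ Hm1). }
  set (D2 := (X1-s1)^2+(X2-y1)^2) in *.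
  assert (HD0: 0 <= D2) by (unfold D2; apply Rplus_le_le_0_compat; apply pow2_ge_0).
  assert (HDe: D2 < eps * eps).
  { change (sqrt D2 < eps) in Hd.
    pose proof (sqrt_sqrt D2 HD0). pose proof (sqrt_pos D2). nra. }
  apply HM in Hm1. apply HM in Hm2. simpl in Hm1, Hm2.
  set (W := ((s2-s1)^2+(y2-y1)^2)/4).
  destruct (Rle_dec W 0) as [HW|HW].
  { assert (s1 = s2 /\ y1 = y2) as [-> ->].
    { unfold W in HW. pose proof (pow2_ge_0 (s2-s1)). pose proof (pow2_ge_0 (y2-y1)).
      split; nra. }
    reflexivity. }
  exfalso. apply Rnot_le_lt in HW.
  set (s := (s1+s2)/2). set (l := (y1+y2)/2).
  assert (Hs: a <= s <= b) by (unfold s; lra).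
  assert (Hid: (X1-s)^2+(X2-l)^2 = D2 - W).
  { assert ((X1-s)^2+(X2-l)^2 = ((X1-s1)^2+(X2-y1)^2 + ((X1-s2)^2+(X2-y2)^2))/2 - W)
      by (unfold s, l, W; field).
    unfold D2 in *. lra. }
  assert (HWD: W <= D2).
  { pose proof (pow2_ge_0 (X1-s)). pose proof (pow2_ge_0 (X2-l)). lra. }
  assert (Hvy: (X2 - l)^2 <= D2).
  { pose proof (pow2_ge_0 (X1-s)). lra. }
  assert (Hvy1: X2 - l < eps) by nra.
  assert (Hvy2: -(X2 - l) < eps) by nra.
  assert (HDD: (s2-s1)^2 <= 4*W) by (unfold W; pose proof (pow2_ge_0 (y2-y1)); lra).
  assert (Hce1: c1 * eps <= 1/4) by nra.
  assert (Hce2: c2 * eps <= 1/4) by nra.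
  destruct (Rle_dec (psi s) l) as [H1|H1]; destruct (Rle_dec l (phi s)) as [H2|H2].
  - pose proof (Hnear s l (proj2 (HM (s,l)) (conj Hs (conj H1 H2)))). lra.
  - apply Rnot_le_lt in H2.
    set (u := l - phi s).
    assert (Hu: 0 < u) by (unfold u; lra).
    pose proof (Hphi s1 s2 ltac:(lra) ltac:(lra)) as Hp. fold s in Hp.
    assert (Hub: u <= c1/2 * W).
    { assert (c1/8*(s2-s1)^2 <= c1/8*(4*W)) by (apply Rmult_le_compat_l; lra).
      unfold u, l. lra. }
    pose proof (Hnear s (phi s) (proj2 (HM (s,phi s)) (conj Hs (conj (Hord s Hs) (Rle_refl _))))) as Hq.
    replace (X2 - phi s) with ((X2 - l) + u) in Hq by (unfold u; ring).
    assert (Hk: W <= u*u + 2*u*(X2-l)).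
    { assert ((X1 - s)^2 + (X2 - l + u)^2 = (X1-s)^2+(X2-l)^2 + 2*u*(X2-l) + u*u) by ring.
      fold D2 in Hq. lra. }
    assert (Hk2: 2*u*(X2-l) <= 2*u*eps) by nra.
    assert (Huu: u*u <= (c1/2*W)*(c1/2*W)) by nra.
    assert (Hue: 2*u*eps <= c1*W*eps) by nra.
    assert (HW2: (c1/2*W)*(c1/2*W) <= W * (1/64)).
    { assert (c1 * W <= c1 * (eps*eps)) by (apply Rmult_le_compat_l; lra).
      assert (c1*(c1*W) <= c1*(c1*(eps*eps))) by (apply Rmult_le_compat_l; lra).
      assert (0 <= c1*eps) by (apply Rmult_le_pos; lra).
      assert ((c1*eps)*(c1*eps) <= 1/16) by nra.
      assert (c1*(c1*W) <= 1/16) by nra.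
      replace ((c1/2*W)*(c1/2*W)) with (W * (c1*(c1*W)) / 4) by field.
      assert (W * (c1*(c1*W)) <= W * (1/16)) by (apply Rmult_le_compat_l; lra).
      lra. }
    assert (W * (c1*eps) <= W * (1/4)) by (apply Rmult_le_compat_l; lra).
    assert (c1*W*eps = W*(c1*eps)) by ring. lra.
  - apply Rnot_le_lt in H1.
    set (u := psi s - l).
    assert (Hu: 0 < u) by (unfold u; lra).
    pose proof (Hpsi s1 s2 ltac:(lra) ltac:(lra)) as Hp. fold s in Hp.
    assert (Hub: u <= c2/2 * W).
    { assert (c2/8*(s2-s1)^2 <= c2/8*(4*W)) by (apply Rmult_le_compat_l; lra).
      unfold u, l. lra. }
    pose proof (Hnear s (psi s) (proj2 (HM (s,psi s)) (conj Hs (conj (Rle_refl _) (Hord s Hs))))) as Hq.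
    replace (X2 - psi s) with ((X2 - l) - u) in Hq by (unfold u; ring).
    assert (Hk: W <= u*u - 2*u*(X2-l)).
    { assert ((X1 - s)^2 + (X2 - l - u)^2 = (X1-s)^2+(X2-l)^2 - 2*u*(X2-l) + u*u) by ring.
      fold D2 in Hq. lra. }
    assert (Hk2: - (2*u*(X2-l)) <= 2*u*eps) by nra.
    assert (Huu: u*u <= (c2/2*W)*(c2/2*W)) by nra.
    assert (Hue: 2*u*eps <= c2*W*eps) by nra.
    assert (HW2: (c2/2*W)*(c2/2*W) <= W * (1/64)).
    { assert (c2 * W <= c2 * (eps*eps)) by (apply Rmult_le_compat_l; lra).
      assert (c2*(c2*W) <= c2*(c2*(eps*eps))) by (apply Rmult_le_compat_l; lra).
      assert (0 <= c2*eps) by (apply Rmult_le_pos; lra).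
      assert ((c2*eps)*(c2*eps) <= 1/16) by nra.
      assert (c2*(c2*W) <= 1/16) by nra.
      replace ((c2/2*W)*(c2/2*W)) with (W * (c2*(c2*W)) / 4) by field.
      assert (W * (c2*(c2*W)) <= W * (1/16)) by (apply Rmult_le_compat_l; lra).
      lra. }
    assert (W * (c2*eps) <= W * (1/4)) by (apply Rmult_le_compat_l; lra).
    assert (c2*W*eps = W*(c2*eps)) by ring. lra.
  - pose proof (Hord s Hs). lra.
Qed.

End Region.

Lemma region_reach a b phi psi (M : point -> Prop) : a < b ->
  (forall p, M p <-> (a <= fst p <= b /\ psi (fst p) <= snd p <= phi (fst p))) ->
  (forall x, a<=x<=b -> psi x <= phi x) ->
  lipschitz_on phi a b -> lipschitz_on psi a b ->
  semiconcave_on phi a b -> semiconvex_on psi a b -> positive_reach M.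
Proof.
  intros Hab HM Hord Hl1 Hl2 [c1 [Hc1 Hcc1]] [c2 [Hc2 Hcc2]].
  destruct (lip_nonneg _ _ _ Hl1) as [L1 [HL1 Hk1]].
  destruct (lip_nonneg _ _ _ Hl2) as [L2 [HL2 Hk2]].
  assert (Hk2': lipK (fun x => - psi x) a b L2).
  { intros x y Hx Hy. replace (- psi x - - psi y) with (-(psi x - psi y)) by ring.
    rewrite Rabs_Ropp. auto. }
  pose proof (semiconcave_mid phi a b c1 L1 Hab Hc1 HL1 Hk1 Hcc1) as Hphi.
  pose proof (semiconcave_mid (fun x => - psi x) a b c2 L2 Hab Hc2 HL2 Hk2' Hcc2) as Hpsi.
  exists (1/(4*(c1+c2+1))). split.
  - apply Rdiv_lt_0_compat; lra.
  - intros x [m [Hm Hdm]].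
    destruct (exists_nearest a b phi psi M Hab HM Hord L1 L2 HL1 HL2 Hk1 Hk2 x) as [m1 Hn1].
    exists m1. split; [exact Hn1|].
    intros m2 Hn2.
    apply (unique_nearest a b phi psi M HM Hord c1 c2 Hc1 Hc2 Hphi Hpsi x m1 m2 Hn1 Hn2).
    destruct Hn1 as [_ Hn1]. eapply Rle_lt_trans; [apply Hn1; exact Hm| exact Hdm].
Qed.

Theorem lemma2p22 (B : point -> Prop) : B_set B -> positive_reach B.
Proof.
  intros [H|H].
  - destruct H as [r [phi [psi [Hr [Hl1 [Hl2 [Hs [Hc1 [Hc2 [_ [_ [_ [_ HM]]]]]]]]]]]]].
    apply (region_reach 0 r phi psi B Hr HM); auto.
    intros x Hx. specialize (Hs x Hx). lra.
  - destruct H as [r [phi [psi [Hr [Hl1 [Hl2 [Hs [Hc1 [Hc2 [_ [_ [_ [_ HM]]]]]]]]]]]]].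
    apply (region_reach (-r) r phi psi B ltac:(lra) HM); auto.
    intros x Hx. specialize (Hs x Hx). lra.
Qed.
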